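(* Assume the setting described in the context. There is a generalized $C$-sequence $\langle e^m_\alpha:\alpha<\lambda,m<\omega\rangle$ on $\lambda$ such that for all $\alpha<\lambda$ and $m<\omega$: (1) $|e^m_\alpha|\leq\mathrm{cf}(\alpha)+\mu_m^+$, and (2) if $\delta\in S\cap e^m_\alpha$ then $C_\delta[m]\subseteq e^m_\alpha$.
   Context: Setting: $\mu$ is a singular cardinal with $\mathrm{cf}(\mu)=\aleph_0$, $\lambda=\mu^+$, $\sigma$ is regular with $\aleph_0<\sigma<\mu$, $S$ is a stationary subset of $\{\delta<\lambda:\mathrm{cf}(\delta)=\sigma\}$, and $\langle\mu_i:i<\omega\rangle$ is a strictly increasing sequence of regular cardinals cofinal in $\mu$ with $\sigma<\mu_0$. For $\delta\in S$, $c^0_\delta$ is the increasing enumeration of a club subset of $\delta$ of order type $\sigma$, and for every club $E\subseteq\lambda$ the set of $\delta\in S$ with $\mathrm{ran}(c^0_\delta)\subseteq E$ is stationary. $I(\delta,\epsilon,m)=(c^0_\delta(\omega\cdot\epsilon+m),c^0_\delta(\omega\cdot\epsilon+m+1)]$ for $\epsilon<\sigma$, $m<\omega$. $\langle C_\delta:\delta\in S\rangle$ satisfies: $C_\delta$ club in $\delta$; $\mathrm{ran}(c^0_\delta)\subseteq C_\delta$; $|C_\delta\cap I(\delta,\epsilon,m)|\leq\mu_m^+$; every $\alpha\in\mathrm{nacc}(C_\delta)\cap I(\delta,\epsilon,m)$ has $\mathrm{cf}(\alpha)>\mu_m^+$; for every club $E\subseteq\lambda$ there are stationarily many $\delta\in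 S$ with $E\cap\mathrm{nacc}(C_\delta)\cap I(\delta,\epsilon,m)\neq\emptyset$ for all $\epsilon,m$. ($\mathrm{nacc}(C)=C\setminus\{\alpha:\alpha=\sup(\alpha\cap C)\}$.) $C_\delta[m]=\mathrm{ran}(c^0_\delta)\cup\bigcup\{C_\delta\cap I(\delta,\epsilon,i):\epsilon<\sigma, i\leq m\}$. A generalized $C$-sequence on $\lambda$ is a family $\langle e^m_\alpha:\alpha<\lambda,m<\omega\rangle$ such that each $e^m_\alpha$ is closed unbounded in $\alpha$ and $e^m_\alpha\subseteq e^{m+1}_\alpha$. *)

(* Defs.v *)
Set Implicit Arguments.
(* The ordinals < lambda are modelled by an arbitrary type T equipped with a
   strict well-order lt (every well-order is isomorphic to an ordinal, and all
   notions below are invariant under isomorphism).  Cardinals, cofinalities,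
   etc. that are < lambda are represented by elements of T (as von Neumann
   initial ordinals). *)

Section Ordinals.
Variable T : Type.
Variable lt : T -> T -> Prop.

Definition le (a b : T) : Prop := lt a b \/ a = b.

Definition strict_well_order : Prop :=
  (forall a, ~ lt a a) /\
  (forall a b c, lt a b -> lt b c -> lt a c) /\
  (forall a b, lt a b \/ a = b \/ lt b a) /\
  well_founded lt.

Definition below (a : T) : T -> Prop := fun b => lt b a.

Definition card_le (A B : T -> Prop) : Prop :=
  exists f : T -> T, (forall x, A x -> B (f x)) /\
    (forall x y, A x -> A y -> f x = f y -> x = y).

Definition is_card (k : T) : Prop :=
  forall b, lt b k -> ~ card_le (below k) (below b).

Definition csucc (k nu : T) : Prop :=
  ~ card_le (below nu) (below k) /\
  (forall b, lt b nu -> card_le (below b) (below k)).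

Definition card_le_sum (X : T -> Prop) (k nu : T) : Prop :=
  exists X1 X2 : T -> Prop, (forall x, X x -> X1 x \/ X2 x) /\
    card_le X1 (below k) /\ card_le X2 (below nu).

Definition cofinal_in (a : T) (X : T -> Prop) : Prop :=
  (forall x, X x -> lt x a) /\ (forall b, lt b a -> exists g, X g /\ le b g).

Definition is_cf (a k : T) : Prop :=
  (exists X, cofinal_in a X /\ card_le X (below k)) /\
  (forall k', lt k' k -> ~ exists X, cofinal_in a X /\ card_le X (below k')).

Definition regular (k : T) : Prop := is_cf k k.

Definition sup_self (X : T -> Prop) (x : T) : Prop :=
  forall b, lt b x -> exists g, X g /\ lt b g /\ lt g x.

Definition nacc (X : T -> Prop) (x : T) : Prop := X x /\ ~ sup_self X x.

Definition club_in (a : T) (X : T -> Prop) : Prop :=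
  cofinal_in a X /\
  (forall x, lt x a -> (exists b, lt b x) -> sup_self X x -> X x).

Definition club (E : T -> Prop) : Prop :=
  (forall a, exists b, lt a b /\ E b) /\
  (forall x, (exists b, lt b x) -> sup_self E x -> E x).

Definition stationary (S : T -> Prop) : Prop :=
  forall E, club E -> exists d, S d /\ E d.

Definition uncountable (k : T) : Prop :=
  ~ exists f : T -> nat, forall x y, lt x k -> lt y k -> f x = f y -> x = y.

Definition is_succ (x y : T) : Prop := lt x y /\ forall r, lt x r -> le y r.

Fixpoint iter_succ (m : nat) (x y : T) : Prop :=
  match m with
  | O => y = x
  | S m' => exists z, iter_succ m' x z /\ is_succ z y
  end.

Definition lim_or_zero (x : T) : Prop := ~ exists z, is_succ z x.

Definition order_iso (A B : T -> Prop) : Prop :=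
  exists f : T -> T, (forall x, A x -> B (f x)) /\
    (forall x y, A x -> A y -> lt x y -> lt (f x) (f y)) /\
    (forall y, B y -> exists x, A x /\ f x = y).

(* z = omega * eps + m (ordinal arithmetic): omega*eps is the eps-th
   element of the class of zero-or-limit ordinals *)
Definition omega_mul_add (eps : T) (m : nat) (z : T) : Prop :=
  exists eta, lim_or_zero eta /\
    order_iso (fun x => lt x eta /\ lim_or_zero x) (below eps) /\
    iter_succ m eta z.

Definition inI (c0 : T -> T -> T) (d eps : T) (m : nat) (x : T) : Prop :=
  exists z z', omega_mul_add eps m z /\ omega_mul_add eps (S m) z' /\
    lt (c0 d z) x /\ le x (c0 d z').

Definition Cm (sigma : T) (c0 : T -> T -> T) (C : T -> T -> Prop)
    (d : T) (m : nat) (x : T) : Prop :=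
  (exists z, lt z sigma /\ x = c0 d z) \/
  (exists eps i, lt eps sigma /\ i <= m /\ C d x /\ inI c0 d eps i x).

End Ordinals.

(* Main.v *)
Require Import Defs.
From Stdlib Require Import Classical ClassicalEpsilon FunctionalExtensionality PropExtensionality Arith Lia.

Section Main.
Variable T : Type.
Variable lt : T -> T -> Prop.
Hypothesis Hwo : strict_well_order lt.
Variable sigma : T.
Hypothesis Hunc : uncountable lt sigma.

Lemma lt_irr a : ~ lt a a. Proof. destruct Hwo as [H _]; apply H. Qed.
Lemma lt_trans a b c : lt a b -> lt b c -> lt a c.
Proof. destruct Hwo as [_ [H _]]; apply H. Qed.
Lemma lt_tri a b : lt a b \/ a = b \/ lt b a.
Proof. destruct Hwo as [_ [_ [H _]]]; apply H. Qed.
Lemma lt_wf : well_founded lt. Proof. destruct Hwo as [_ [_ [_ H]]]; exact H. Qed.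
Lemma lt_asym a b : lt a b -> ~ lt b a.
Proof. intros H1 H2; apply (lt_irr a); eapply lt_trans; eauto. Qed.
Lemma le_lt_trans a b c : le lt a b -> lt b c -> lt a c.
Proof. intros [H|H] H2; [eapply lt_trans; eauto| subst; auto]. Qed.
Lemma lt_le_trans a b c : lt a b -> le lt b c -> lt a c.
Proof. intros H [H2|H2]; [eapply lt_trans; eauto| subst; auto]. Qed.
Lemma le_trans a b c : le lt a b -> le lt b c -> le lt a c.
Proof. intros [H|H] H2; [left; eapply lt_le_trans; eauto| subst; auto]. Qed.
Lemma le_refl a : le lt a a. Proof. right; reflexivity. Qed.
Lemma not_lt_le a b : ~ lt a b -> le lt b a.
Proof. intros H; destruct (lt_tri a b) as [H1|[H1|H1]]; [tauto|right; auto|left; auto]. Qed.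
Lemma le_not_lt a b : le lt a b -> ~ lt b a.
Proof. intros [H|H] H2; [eapply lt_asym; eauto| subst; eapply lt_irr; eauto]. Qed.

Definition inj {I J : Type} (A : I -> Prop) (B : J -> Prop) :=
  exists g : I -> J, (forall x, A x -> B (g x)) /\
    (forall x y, A x -> A y -> g x = g y -> x = y).

Lemma inj_refl {I} (A : I -> Prop) : inj A A.
Proof. exists (fun x => x); auto. Qed.
Lemma inj_trans {I J K} (A : I -> Prop) (B : J -> Prop) (C : K -> Prop) :
  inj A B -> inj B C -> inj A C.
Proof.
  intros [g [g1 g2]] [h [h1 h2]]; exists (fun x => h (g x)); split; auto.
Qed.
Lemma inj_mono_l {I J} (A A' : I -> Prop) (B : J -> Prop) :
  (forall x, A x -> A' x) -> inj A' B -> inj A B.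
Proof. intros H [g [g1 g2]]; exists g; split; auto. Qed.
Lemma inj_mono_r {I J} (A : I -> Prop) (B B' : J -> Prop) :
  (forall x, B x -> B' x) -> inj A B -> inj A B'.
Proof. intros H [g [g1 g2]]; exists g; split; auto. Qed.
Lemma inj_prod {I J} (A A' : I -> Prop) (B B' : J -> Prop) :
  inj A B -> inj A' B' ->
  inj (fun q : I * I => A (fst q) /\ A' (snd q)) (fun q : J * J => B (fst q) /\ B' (snd q)).
Proof.
  intros [g [g1 g2]] [h [h1 h2]].
  exists (fun q => (g (fst q), h (snd q))); split.
  - intros [x y] [H1 H2]; simpl; auto.
  - intros [x y] [x' y'] [H1 H2] [H3 H4] E; simpl in *. injection E; intros.
    f_equal; auto.
Qed.
Lemma below_mono a b : le lt a b -> forall x, below lt a x -> below lt b x.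
Proof. unfold below; intros H x Hx; eapply lt_le_trans; eauto. Qed.
Lemma inj_below_mono {I} (A : I -> Prop) a b : le lt a b -> inj A (below lt a) -> inj A (below lt b).
Proof. intros H; apply inj_mono_r; apply below_mono; auto. Qed.

Lemma least_ex (P : T -> Prop) x : P x -> exists y, P y /\ forall z, P z -> ~ lt z y.
Proof.
  revert x; intro x; induction x as [x IH] using (well_founded_ind lt_wf); intros Px.
  destruct (classic (exists z, P z /\ lt z x)) as [[z [Pz Hz]]|Hn].
  - exact (IH z Hz Pz).
  - exists x; split; auto. intros z Pz Hz; apply Hn; eauto.
Qed.
Definition lst (P : T -> Prop) : T :=
  epsilon (inhabits sigma) (fun y => P y /\ forall z, P z -> ~ lt z y).
Lemma lst_spec P : (exists x, P x) -> P (lst P) /\ forall z, P z -> ~ lt z (lst P).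
Proof. intros [x Px]. unfold lst. apply epsilon_spec. apply (least_ex P x Px). Qed.

Fixpoint f (n : nat) : T :=
  match n with O => lst (fun _ => True) | S n => lst (fun t => lt (f n) t) end.

Lemma not_cover : ~ (forall x, lt x sigma -> exists i, x = f i).
Proof.
  intros H; apply Hunc.
  exists (fun x => epsilon (inhabits 0) (fun i => x = f i)).
  intros x y Hx Hy E.
  pose proof (epsilon_spec (inhabits 0) (fun i => x = f i) (H x Hx)) as Ex.
  pose proof (epsilon_spec (inhabits 0) (fun i => y = f i) (H y Hy)) as Ey.
  simpl in *. rewrite Ex, Ey, E; reflexivity.
Qed.

Lemma f_props n : lt (f n) sigma /\ (forall x, lt x (f n) -> exists i, (i < n)%nat /\ x = f i)
   /\ (forall i, (i < n)%nat -> lt (f i) (f n)).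
Proof.
  induction n as [|n [IH1 [IH2 IH3]]].
  - destruct (lst_spec (fun _ : T => True)) as [_ H]; [exists sigma; auto|].
    simpl. split; [|split].
    + destruct (lt_tri (lst (fun _ => True)) sigma) as [H1|[H1|H1]]; auto.
      * exfalso; apply not_cover. intros x Hx. rewrite <- H1 in Hx. exfalso; eapply H; eauto.
      * exfalso; eapply H; eauto.
    + intros x Hx; exfalso; eapply H; eauto.
    + intros; lia.
  - assert (Ht : exists t, lt (f n) t /\ lt t sigma).
    { apply NNPP; intros Hn. apply not_cover. intros x Hx.
      destruct (lt_tri x (f n)) as [H1|[H1|H1]].
      - destruct (IH2 x H1) as [i [_ Hi]]; eauto.
      - eauto.
      - exfalso; apply Hn; eauto. }
    destruct Ht as [t [Ht1 Ht2]].
    destruct (lst_spec (fun t => lt (f n) t)) as [Hs1 Hs2]; [eauto|].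
    simpl. split; [|split].
    + apply (le_lt_trans _ t); auto. apply not_lt_le. apply Hs2; auto.
    + intros x Hx. destruct (lt_tri x (f n)) as [H1|[H1|H1]].
      * destruct (IH2 x H1) as [i [Hi Hi2]]; exists i; split; auto.
      * exists n; auto.
      * exfalso; eapply Hs2; eauto.
    + intros i Hi. destruct (Nat.eq_dec i n) as [->|Hne]; auto.
      eapply lt_trans; [apply IH3; lia| auto].
Qed.

Lemma f_inj i j : f i = f j -> i = j.
Proof.
  intros E. destruct (Nat.lt_trichotomy i j) as [H|[H|H]]; auto.
  - exfalso. pose proof (proj2 (proj2 (f_props j)) i H). rewrite E in H0. eapply lt_irr; eauto.
  - exfalso. pose proof (proj2 (proj2 (f_props i)) j H). rewrite E in H0. eapply lt_irr; eauto.
Qed.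

Definition om := lst (fun t => forall n, t <> f n).
Lemma om_ex : exists t, lt t sigma /\ forall n, t <> f n.
Proof.
  apply NNPP; intros Hn. apply not_cover. intros x Hx.
  apply NNPP; intros Hx2. apply Hn. exists x; split; auto.
  intros n E; apply Hx2; eauto.
Qed.
Lemma om_spec0 : (forall n, om <> f n) /\ forall z, (forall n, z <> f n) -> ~ lt z om.
Proof. apply (lst_spec (fun t => forall n, t <> f n)). destruct om_ex as [t [_ Ht]]; eauto. Qed.
Lemma om_lt_sigma : lt om sigma.
Proof.
  destruct om_ex as [t [Ht1 Ht2]]. apply (le_lt_trans _ t); auto.
  apply not_lt_le. apply om_spec0; auto.
Qed.
Lemma om_spec x : lt x om <-> exists n, x = f n.
Proof.
  split.
  - intros H; apply NNPP; intros Hn. eapply (proj2 om_spec0); [|exact H]. intros n E; apply Hn; eauto.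
  - intros [n ->]. destruct (lt_tri (f n) om) as [H|[H|H]]; auto.
    + exfalso; eapply (proj1 om_spec0); eauto.
    + destruct (proj1 (proj2 (f_props n)) om H) as [i [_ Hi]].
      exfalso; eapply (proj1 om_spec0); eauto.
Qed.
Lemma f_lt_om n : lt (f n) om. Proof. apply om_spec; eauto. Qed.

Lemma divmod_uniq a b c d n : a*n+b = c*n+d -> (b < n)%nat -> (d < n)%nat -> a = c /\ b = d.
Proof.
  intros E Hb Hd. assert (a = c).
  { destruct (Nat.lt_trichotomy a c) as [H|[H|H]]; auto.
    - assert (a*n + n <= c*n) by nia. lia.
    - assert (c*n + n <= a*n) by nia. lia. }
  subst; lia.
Qed.

Lemma fin_prod n : inj (fun q : T*T => lt (fst q) (f n) /\ lt (snd q) (f n)) (below lt (f (n*n))).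
Proof.
  set (idx := fun x => epsilon (inhabits 0) (fun i => (i < n)%nat /\ x = f i)).
  assert (Hi : forall x, lt x (f n) -> (idx x < n)%nat /\ x = f (idx x)).
  { intros x Hx. apply (epsilon_spec (inhabits 0) (fun i => (i < n)%nat /\ x = f i)).
    apply (proj1 (proj2 (f_props n)) x Hx). }
  exists (fun q => f (idx (fst q) * n + idx (snd q))). split.
  - intros [x y] [Hx Hy]; simpl in *. unfold below.
    apply (proj2 (proj2 (f_props (n*n)))).
    destruct (Hi x Hx), (Hi y Hy). nia.
  - intros [x y] [x' y'] [Hx Hy] [Hx' Hy'] E; simpl in *.
    apply f_inj in E.
    destruct (Hi x Hx) as [a1 b1], (Hi y Hy) as [a2 b2], (Hi x' Hx') as [a3 b3], (Hi y' Hy') as [a4 b4].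
    destruct (divmod_uniq _ _ _ _ _ E a2 a4) as [E1 E2].
    rewrite b1, b2, b3, b4, E1, E2; reflexivity.
Qed.

Definition mx (a b : T) : T := if excluded_middle_informative (lt a b) then b else a.
Lemma mx_ge_l a b : le lt a (mx a b).
Proof. unfold mx; destruct excluded_middle_informative; [left; auto|apply le_refl]. Qed.
Lemma mx_ge_r a b : le lt b (mx a b).
Proof. unfold mx; destruct excluded_middle_informative; [apply le_refl|apply not_lt_le; auto]. Qed.
Lemma mx_cases a b : mx a b = a \/ mx a b = b.
Proof. unfold mx; destruct excluded_middle_informative; auto. Qed.

Definition mxp (u : T*T) := mx (fst u) (snd u).
Definition pr (u v : T*T) : Prop :=
  lt (mxp u) (mxp v) \/ (mxp u = mxp v /\ (lt (fst u) (fst v) \/ (fst u = fst v /\ lt (snd u) (snd v)))).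

Lemma wf_pr : well_founded pr.
Proof.
  assert (H : forall a x y, mx x y = a -> Acc pr (x,y)).
  { intro a; induction a as [a IHa] using (well_founded_ind lt_wf).
    intro x; induction x as [x IHx] using (well_founded_ind lt_wf).
    intro y; induction y as [y IHy] using (well_founded_ind lt_wf).
    intros Ha. constructor. intros [u v] Hp. unfold pr, mxp in Hp; simpl in Hp.
    destruct Hp as [Hp|[E [Hp|[E2 Hp]]]].
    - apply (IHa (mx u v)); [rewrite <- Ha; auto|reflexivity].
    - apply (IHx u Hp v). congruence.
    - subst u. apply (IHy v Hp). congruence. }
  intros [x y]; eapply H; reflexivity.
Qed.

Lemma pr_trans u v w : pr u v -> pr v w -> pr u w.
Proof.
  unfold pr; intros H1 H2.
  destruct H1 as [H1|[E1 H1]]; destruct H2 as [H2|[E2 H2]].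
  - left; eapply lt_trans; eauto.
  - left; rewrite <- E2; auto.
  - left; rewrite E1; auto.
  - right; split; [congruence|].
    destruct H1 as [H1|[F1 H1]]; destruct H2 as [H2|[F2 H2]].
    + left; eapply lt_trans; eauto.
    + left; rewrite <- F2; auto.
    + left; rewrite F1; auto.
    + right; split; [congruence|eapply lt_trans; eauto].
Qed.

Lemma pr_tri u v : pr u v \/ u = v \/ pr v u.
Proof.
  unfold pr. destruct (lt_tri (mxp u) (mxp v)) as [H|[H|H]]; [left; left; auto| |right; right; left; auto].
  destruct (lt_tri (fst u) (fst v)) as [H1|[H1|H1]].
  - left; right; auto.
  - destruct (lt_tri (snd u) (snd v)) as [H2|[H2|H2]].
    + left; right; auto.
    + right; left. destruct u, v; simpl in *; congruence.
    + right; right; right; auto.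
  - right; right; right; auto.
Qed.

Lemma pr_mxp u v : pr u v -> le lt (mxp u) (mxp v).
Proof. intros [H|[H _]]; [left; auto|right; auto]. Qed.

Definition rF (w : T*T) (rec : forall v, pr v w -> T) : T :=
  lst (fun t => ~ exists v (h : pr v w), rec v h = t).
Definition rk : T*T -> T := Fix wf_pr (fun _ => T) rF.
Lemma rk_eq w : rk w = lst (fun t => ~ exists v, pr v w /\ rk v = t).
Proof.
  unfold rk at 1. rewrite Fix_eq.
  - unfold rF. f_equal. apply functional_extensionality; intro t.
    apply propositional_extensionality. split.
    + intros H [v [h e]]; apply H; exists v, h; exact e.
    + intros H [v [h e]]; apply H; exists v; split; [exact h| exact e].
  - intros x f1 f2 Hf. unfold rF. f_equal. apply functional_extensionality; intro t.
    apply propositional_extensionality; split; intros H [v [h e]]; apply H; exists v, h.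
    + rewrite Hf; exact e.
    + rewrite <- Hf; exact e.
Qed.

Lemma rank_inj (W : T*T -> Prop) (k : T) : is_card lt k ->
  (forall w v, W w -> pr v w -> W v) ->
  (forall w, W w -> exists b, lt b k /\ inj (fun v => pr v w) (below lt b)) ->
  inj W (below lt k).
Proof.
  intros Hk Hdown Hseg.
  assert (HA : forall w, W w -> exists t, lt t k /\ ~ exists v, pr v w /\ rk v = t).
  { intros w Hw. apply NNPP; intros Hn.
    destruct (Hseg w Hw) as [b [Hb [g [g1 g2]]]].
    apply (Hk b Hb).
    set (pick := fun t => epsilon (inhabits w) (fun v => pr v w /\ rk v = t)).
    assert (Hp : forall t, lt t k -> pr (pick t) w /\ rk (pick t) = t).
    { intros t Ht. apply (epsilon_spec (inhabits w) (fun v => pr v w /\ rk v = t)).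
      apply NNPP; intros Hn2; apply Hn; exists t; split; auto. }
    exists (fun t => g (pick t)). split.
    - intros t Ht. apply g1. apply Hp; auto.
    - intros x y Hx Hy E. apply g2 in E; try apply Hp; auto.
      rewrite <- (proj2 (Hp x Hx)), <- (proj2 (Hp y Hy)), E; reflexivity. }
  assert (HR : forall w, W w -> lt (rk w) k /\ ~ (exists v, pr v w /\ rk v = rk w) /\
             forall t, lt t (rk w) -> exists v, pr v w /\ rk v = t).
  { intros w Hw. destruct (HA w Hw) as [t [Ht1 Ht2]].
    destruct (lst_spec (fun t => ~ exists v, pr v w /\ rk v = t)) as [S1 S2]; [eauto|].
    rewrite <- rk_eq in S1, S2. split; [|split]; auto.
    - apply (le_lt_trans _ t); auto. apply not_lt_le; auto.
    - intros t' Ht'. apply NNPP; intros Hn. eapply S2; eauto. }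
  assert (HB : forall w v, W w -> pr v w -> lt (rk v) (rk w)).
  { intros w v Hw Hv. assert (Wv : W v) by eauto.
    destruct (lt_tri (rk v) (rk w)) as [H|[H|H]]; auto.
    - exfalso. apply (proj1 (proj2 (HR w Hw))); eauto.
    - exfalso. destruct (proj2 (proj2 (HR v Wv)) _ H) as [v' [H1 H2]].
      apply (proj1 (proj2 (HR w Hw))); exists v'; split; auto. eapply pr_trans; eauto. }
  exists rk. split.
  - intros w Hw; apply HR; auto.
  - intros x y Hx Hy E. destruct (pr_tri x y) as [H|[H|H]]; auto.
    + exfalso. pose proof (HB y x Hy H). rewrite E in H0. eapply lt_irr; eauto.
    + exfalso. pose proof (HB x y Hx H). rewrite E in H0. eapply lt_irr; eauto.
Qed.

Definition hess (k : T) := inj (fun q : T*T => lt (fst q) k /\ lt (snd q) k) (below lt k).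

Lemma card_limit k x : is_card lt k -> le lt om k -> lt x k -> exists d, lt x d /\ lt d k.
Proof.
  intros Hk Hom Hx. apply NNPP; intros Hn.
  destruct (classic (lt x om)) as [Hxo|Hxo].
  - apply om_spec in Hxo as [n ->]. apply Hn. exists (f (S n)). split.
    + apply (proj2 (proj2 (f_props (S n)))); lia.
    + eapply lt_le_trans; [apply f_lt_om|auto].
  - apply not_lt_le in Hxo.
    set (idx := fun t => epsilon (inhabits 0) (fun n => t = f n)).
    assert (Hi : forall t, (exists n, t = f n) -> t = f (idx t)).
    { intros t Ht; apply (epsilon_spec (inhabits 0) (fun n => t = f n)); auto. }
    apply (Hk x Hx).
    exists (fun t => if excluded_middle_informative (t = x) then f 0 else
              if excluded_middle_informative (exists n, t = f n) then f (S (idx t)) else t).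
    split.
    + intros t Ht. unfold below in *.
      destruct excluded_middle_informative as [E|E].
      * eapply lt_le_trans; [apply f_lt_om|auto].
      * destruct excluded_middle_informative as [E2|E2].
        -- eapply lt_le_trans; [apply f_lt_om|auto].
        -- destruct (lt_tri t x) as [H|[H|H]]; [auto|tauto|].
           exfalso; apply Hn; eauto.
    + intros t1 t2 H1 H2 E.
      repeat match type of E with context [excluded_middle_informative ?P] =>
        destruct (excluded_middle_informative P) end;
      first [ congruence
            | (apply f_inj in E; discriminate)
            | (exfalso; match goal with H : ~ (exists n, _ = f n) |- _ =>
                 apply H; eexists; symmetry; eassumption end)
            | (exfalso; match goal with H : ~ (exists n, _ = f n) |- _ =>
                 apply H; eexists; eassumption end)
            | (apply f_inj in E; injection E; intros E';
               rewrite (Hi t1), (Hi t2), E'; auto)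
            | (subst; reflexivity) ].
Qed.
Lemma mxp_lt_k k w : lt (fst w) k -> lt (snd w) k -> lt (mxp w) k.
Proof. intros; unfold mxp; destruct (mx_cases (fst w) (snd w)) as [E|E]; rewrite E; auto. Qed.

Lemma pr_comp v w : pr v w -> le lt (fst v) (mxp w) /\ le lt (snd v) (mxp w).
Proof.
  intros Hv. pose proof (pr_mxp _ _ Hv) as H. split.
  - eapply le_trans; [apply mx_ge_l| exact H].
  - eapply le_trans; [apply mx_ge_r| exact H].
Qed.

Lemma hessenberg k : is_card lt k -> le lt om k -> hess k.
Proof.
  induction k as [k IH] using (well_founded_ind lt_wf). intros Hk Hom.
  apply rank_inj; auto.
  - intros w v [Hw1 Hw2] Hv. pose proof (mxp_lt_k k w Hw1 Hw2) as Hm.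
    destruct (pr_comp v w Hv) as [A1 A2].
    split; eapply le_lt_trans; eauto.
  - intros w [Hw1 Hw2].
    destruct (card_limit k (mxp w) Hk Hom (mxp_lt_k k w Hw1 Hw2)) as [d [Hd1 Hd2]].
    assert (Hseg : forall v, pr v w -> below lt d (fst v) /\ below lt d (snd v)).
    { intros v Hv. destruct (pr_comp v w Hv) as [A1 A2]. unfold below.
      split; eapply le_lt_trans; eauto. }
    destruct (lst_spec (fun b => card_le (below lt d) (below lt b))) as [B1 B2].
    { exists d. apply (inj_refl (below lt d)). }
    set (b0 := lst (fun b => card_le (below lt d) (below lt b))) in *.
    assert (Hb0d : le lt b0 d). { apply not_lt_le. apply B2. apply (inj_refl (below lt d)). }
    assert (Hb0k : lt b0 k) by (eapply le_lt_trans; eauto).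
    assert (Hb0c : is_card lt b0).
    { intros b Hb Hc. apply (B2 b); [|auto]. exact (inj_trans _ _ _ B1 Hc). }
    assert (Hs1 : inj (fun v => pr v w) (fun q : T*T => below lt b0 (fst q) /\ below lt b0 (snd q))).
    { eapply inj_trans; [| exact (inj_prod _ _ _ _ B1 B1)].
      eapply inj_mono_l; [exact Hseg| apply inj_refl]. }
    destruct (classic (lt b0 om)) as [Ho|Ho].
    + apply om_spec in Ho as [n En]. exists (f (n*n)). split.
      * eapply lt_le_trans; [apply f_lt_om|auto].
      * eapply inj_trans; [exact Hs1|]. rewrite En. apply fin_prod.
    + exists b0; split; auto. eapply inj_trans; [exact Hs1|].
      apply (IH b0 Hb0k Hb0c (not_lt_le _ _ Ho)).
Qed.

Lemma union_bound {I : Type} (A : I -> Prop) (F : I -> T -> Prop) k : hess k ->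
  inj A (below lt k) -> (forall i, A i -> inj (F i) (below lt k)) ->
  inj (fun x => exists i, A i /\ F i x) (below lt k).
Proof.
  intros [p [pm pi]] [g [gm gi]] HF.
  destruct (classic (inhabited I)) as [[i0]|nI].
  2: { exists (fun x => x). split; intros x; [intros [i _]; exfalso; apply nI; constructor; exact i|].
       intros y [i _]; exfalso; apply nI; constructor; exact i. }
  assert (Hh : forall i, exists h : T -> T, A i -> (forall x, F i x -> lt (h x) k) /\
      (forall x y, F i x -> F i y -> h x = h y -> x = y)).
  { intro i; destruct (classic (A i)) as [Ai|nAi].
    - destruct (HF i Ai) as [h Hh]; exists h; auto.
    - exists (fun x => x); tauto. }
  set (h := fun i => proj1_sig (constructive_indefinite_description _ (Hh i))).
  assert (hs : forall i, A i -> (forall x, F i x -> lt (h i x) k) /\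
      (forall x y, F i x -> F i y -> h i x = h i y -> x = y)).
  { intros i; exact (proj2_sig (constructive_indefinite_description _ (Hh i))). }
  set (sel := fun x => epsilon (inhabits i0) (fun i => A i /\ F i x)).
  assert (ss : forall x, (exists i, A i /\ F i x) -> A (sel x) /\ F (sel x) x).
  { intros x Hx. apply (epsilon_spec (inhabits i0) (fun i => A i /\ F i x)); auto. }
  exists (fun x => p (g (sel x), h (sel x) x)). split.
  - intros x Hx. destruct (ss x Hx) as [S1 S2]. apply pm. simpl. split.
    + apply gm; auto.
    + apply (hs _ S1); auto.
  - intros x y Hx Hy E. destruct (ss x Hx) as [S1 S2]. destruct (ss y Hy) as [S3 S4].
    apply pi in E.
    + injection E; intros E2 E1. apply gi in E1; auto.
      rewrite <- E1 in E2, S4. apply (hs _ S1); auto.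
    + simpl; split; [apply gm; auto| apply (hs _ S1); auto].
    + simpl; split; [apply gm; auto| apply (hs _ S3); auto].
Qed.

Lemma union2 (A B : T -> Prop) k : hess k -> le lt om k ->
  inj A (below lt k) -> inj B (below lt k) -> inj (fun x => A x \/ B x) (below lt k).
Proof.
  intros Hk Hom HA HB.
  apply inj_mono_l with (A' := fun x => exists b : bool, True /\ (if b then A x else B x)).
  { intros x [H|H]; [exists true|exists false]; auto. }
  apply union_bound; auto.
  - exists (fun b : bool => f (if b then 0 else 1)). split.
    + intros b _. eapply lt_le_trans; [apply f_lt_om|auto].
    + intros [|] [|] _ _ E; auto; apply f_inj in E; discriminate.
  - intros [|] _; auto.
Qed.
Variable mu_ mup : nat -> T.
Hypothesis Hmu_inc : forall i j, i < j -> lt (mu_ i) (mu_ j).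
Hypothesis Hmup : forall m, csucc lt (mu_ m) (mup m).
Hypothesis Hsig_lt : lt sigma (mu_ 0).
Variable Sset : T -> Prop.
Variable c0 : T -> T -> T.
Variable C : T -> T -> Prop.
Hypothesis HS_cf : forall d, Sset d -> is_cf lt d sigma.
Hypothesis Hc0_club : forall d, Sset d ->
      club_in lt d (fun x => exists z, lt z sigma /\ x = c0 d z).
Hypothesis HC_club : forall d, Sset d -> club_in lt d (C d).
Hypothesis HC_card : forall d, Sset d -> forall eps m, lt eps sigma ->
      card_le (fun x => C d x /\ inI lt c0 d eps m x) (below lt (mup m)).

Lemma mu_lt_mup m : lt (mu_ m) (mup m).
Proof.
  apply NNPP; intros H. apply (proj1 (Hmup m)). apply not_lt_le in H.
  apply (inj_mono_r _ (below lt (mup m))); [apply below_mono; auto| apply inj_refl].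
Qed.
Lemma mu_le i m : (i <= m)%nat -> le lt (mu_ i) (mu_ m).
Proof. intros H. destruct (Nat.eq_dec i m) as [->|H2]; [apply le_refl| left; apply Hmu_inc; lia]. Qed.
Lemma mup_le i m : (i <= m)%nat -> le lt (mup i) (mup m).
Proof.
  intros H. apply not_lt_le; intros H2. apply (proj1 (Hmup m)).
  pose proof (proj2 (Hmup i) _ H2) as H3.
  eapply inj_below_mono; [apply mu_le; exact H| exact H3].
Qed.
Lemma sig_lt_mup m : lt sigma (mup m).
Proof.
  eapply lt_trans; [exact Hsig_lt|]. eapply le_lt_trans; [apply mu_le; lia| apply mu_lt_mup].
Qed.
Lemma om_lt_mup m : lt om (mup m).
Proof. eapply lt_trans; [apply om_lt_sigma|apply sig_lt_mup]. Qed.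
Lemma mup_card m : is_card lt (mup m).
Proof.
  intros b Hb Hc. apply (proj1 (Hmup m)). eapply inj_trans; [exact Hc| apply (proj2 (Hmup m) b Hb)].
Qed.
Lemma cf_card a k : is_cf lt a k -> is_card lt k.
Proof.
  intros [[X [H1 H2]] H3] b Hb Hc. apply (H3 b Hb). exists X; split; auto.
  eapply inj_trans; eauto.
Qed.

Lemma cf_ex a : exists p : T * (T -> Prop), is_cf lt a (fst p) /\ cofinal_in lt a (snd p) /\
   card_le (snd p) (below lt (fst p)).
Proof.
  set (P := fun k => exists X, cofinal_in lt a X /\ card_le X (below lt k)).
  destruct (lst_spec P) as [L1 L2].
  { exists a. exists (below lt a). split; [split|].
    - unfold below; auto.
    - intros b Hb; exists b; split; [exact Hb| apply le_refl].
    - apply (inj_refl (below lt a)). }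
  destruct L1 as [X [X1 X2]]. exists (lst P, X). simpl. split; [|split]; auto.
  split; [exists X; split; auto|]. intros k' Hk' Hn. exact (L2 k' Hn Hk').
Qed.
Definition cfX a := proj1_sig (constructive_indefinite_description _ (cf_ex a)).
Definition cfk a := fst (cfX a).
Definition Xc a := snd (cfX a).
Lemma cfX_spec a : is_cf lt a (cfk a) /\ cofinal_in lt a (Xc a) /\ card_le (Xc a) (below lt (cfk a)).
Proof. exact (proj2_sig (constructive_indefinite_description _ (cf_ex a))). Qed.

Definition kap a m := if excluded_middle_informative (lt (cfk a) (mup m)) then mup m else cfk a.
Lemma kap_card a m : is_card lt (kap a m).
Proof. unfold kap; destruct excluded_middle_informative; [apply mup_card| eapply cf_card, cfX_spec]. Qed.
Lemma mup_le_kap a m : le lt (mup m) (kap a m).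
Proof. unfold kap; destruct excluded_middle_informative; [apply le_refl| apply not_lt_le; auto]. Qed.
Lemma cf_le_kap a m : le lt (cfk a) (kap a m).
Proof. unfold kap; destruct excluded_middle_informative; [left; auto| apply le_refl]. Qed.
Lemma kap_om a m : le lt om (kap a m).
Proof. left. eapply lt_le_trans; [apply om_lt_mup| apply mup_le_kap]. Qed.
Lemma kap_hess a m : hess (kap a m).
Proof. apply hessenberg; [apply kap_card| apply kap_om]. Qed.
Lemma kap_mono a m : le lt (kap a m) (kap a (S m)).
Proof.
  unfold kap at 1; destruct excluded_middle_informative.
  - eapply le_trans; [apply mup_le with (m := S m); lia| apply mup_le_kap].
  - apply cf_le_kap.
Qed.

Definition cl a (X : T -> Prop) : T -> Prop := fun x => lt x a /\ (X x \/ sup_self lt X x).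
Lemma cl_lt a X x : cl a X x -> lt x a. Proof. intros [H _]; auto. Qed.
Lemma cl_in a (X : T -> Prop) x : X x -> lt x a -> cl a X x. Proof. intros; split; auto. Qed.
Lemma cl_closed a X x : lt x a -> sup_self lt (cl a X) x -> cl a X x.
Proof.
  intros Hx Hs. split; auto. right. intros b Hb.
  destruct (Hs b Hb) as [g [[_ [Hg|Hg]] [H1 H2]]].
  - eauto.
  - destruct (Hg b H1) as [g' [G1 [G2 G3]]]. exists g'; split; [auto|split; auto].
    eapply lt_trans; eauto.
Qed.

Lemma cl_card a (X : T -> Prop) k : (forall b, lt b a -> exists g, X g /\ le lt b g) ->
  hess k -> le lt om k -> inj X (below lt k) -> inj (cl a X) (below lt k).
Proof.
  intros Hcof Hk Hom HX.
  set (Z := fun x => lt x a /\ sup_self lt X x /\ ~ X x).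
  apply inj_mono_l with (A' := fun x => X x \/ Z x).
  { intros x [H1 [H2|H2]]; [left; auto|]. destruct (classic (X x)); [left; auto|right; split; auto]. }
  apply union2; auto.
  eapply inj_trans; [|exact HX].
  set (nx := fun x => lst (fun g => X g /\ le lt x g)).
  assert (Hn : forall x, lt x a -> (X (nx x) /\ le lt x (nx x)) /\
      forall z, X z /\ le lt x z -> ~ lt z (nx x)).
  { intros x Hx. apply (lst_spec (fun g => X g /\ le lt x g)). destruct (Hcof x Hx) as [g Hg]; eauto. }
  exists nx. split.
  - intros x [Hx _]. apply Hn; auto.
  - assert (Hlt : forall x y, Z x -> Z y -> lt x y -> lt (nx x) (nx y)).
    { intros x y [Hx _] [Hy [Hsy _]] Hxy.
      destruct (Hsy x Hxy) as [g [G1 [G2 G3]]].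
      apply (le_lt_trans _ g).
      - apply not_lt_le. apply (proj2 (Hn x Hx)). split; auto. left; auto.
      - eapply lt_le_trans; [exact G3| apply (proj1 (Hn y Hy))]. }
    intros x y Hx Hy E. destruct (lt_tri x y) as [H|[H|H]]; auto.
    + exfalso; pose proof (Hlt x y Hx Hy H); rewrite E in H0; eapply lt_irr; eauto.
    + exfalso; pose proof (Hlt y x Hy Hx H); rewrite E in H0; eapply lt_irr; eauto.
Qed.

Lemma Cm_lt d m x : Sset d -> Cm lt sigma c0 C d m x -> lt x d.
Proof.
  intros Hd [[z [Hz ->]]|[eps [i [_ [_ [HC _]]]]]].
  - apply (proj1 (proj1 (Hc0_club d Hd))). eauto.
  - apply (proj1 (proj1 (HC_club d Hd))). auto.
Qed.

Lemma Cm_card d m k : Sset d -> hess k -> le lt om k -> le lt (mup m) k ->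
  inj (Cm lt sigma c0 C d m) (below lt k).
Proof.
  intros Hd Hk Hom Hmk.
  assert (Hsk : lt sigma k) by (eapply lt_le_trans; [apply sig_lt_mup|exact Hmk]).
  set (A := fun q : T * nat => lt (fst q) sigma /\ (snd q <= m)%nat).
  set (F := fun (q : T * nat) x => C d x /\ inI lt c0 d (fst q) (snd q) x).
  apply inj_mono_l with (A' := fun x => (exists z, lt z sigma /\ x = c0 d z) \/
                                         exists q, A q /\ F q x).
  { intros x Hx. unfold Cm in Hx. destruct Hx as [H|[eps [i [H1 [H2 H3]]]]].
    - left; exact H.
    - right; exists (eps, i). unfold A, F; simpl. tauto. }
  apply union2; auto.
  - set (zz := fun x => epsilon (inhabits sigma) (fun z => lt z sigma /\ x = c0 d z)).
    exists zz. split.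
    + intros x Hx. pose proof (epsilon_spec (inhabits sigma) (fun z => lt z sigma /\ x = c0 d z) Hx) as [H1 H2].
      unfold below. eapply lt_trans; eauto.
    + intros x y Hx Hy E.
      pose proof (epsilon_spec (inhabits sigma) (fun z => lt z sigma /\ x = c0 d z) Hx) as [H1 H2].
      pose proof (epsilon_spec (inhabits sigma) (fun z => lt z sigma /\ y = c0 d z) Hy) as [H3 H4].
      fold (zz x) in H2; fold (zz y) in H4. rewrite H2, H4, E; reflexivity.
  - apply union_bound; auto.
    + destruct Hk as [p [pm pi]].
      exists (fun q => p (fst q, f (snd q))). split.
      * intros q [Hq1 Hq2]. apply pm; simpl; split; [eapply lt_trans; eauto|].
        eapply lt_le_trans; [apply f_lt_om|auto].
      * intros [e1 i1] [e2 i2] [Q1 _] [Q2 _] E; simpl in *.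
        apply pi in E; simpl.
        -- injection E; intros E2 E1. apply f_inj in E2; subst; auto.
        -- split; [eapply lt_trans; eauto| eapply lt_le_trans; [apply f_lt_om|auto]].
        -- split; [eapply lt_trans; eauto| eapply lt_le_trans; [apply f_lt_om|auto]].
    + intros [eps i] [Q1 Q2]; simpl in *.
      eapply inj_below_mono; [| apply (HC_card d Hd eps i Q1)].
      eapply le_trans; [apply mup_le; exact Q2| exact Hmk].
Qed.
Lemma no_omega_limit d (A : nat -> T -> Prop) : is_cf lt d sigma ->
  (forall n, ~ sup_self lt (A n) d) -> ~ sup_self lt (fun x => exists n, A n x) d.
Proof.
  intros Hcf Hn Hs.
  assert (Hb : forall n, exists b, lt b d /\ forall g, A n g -> lt b g -> lt g d -> False).
  { intro n. specialize (Hn n). unfold sup_self in Hn. apply not_all_ex_not in Hn as [b Hb].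
    exists b. apply imply_to_and in Hb as [Hbd Hb2]. split; auto.
    intros g Ag H1 H2; apply Hb2; eauto. }
  set (b := fun n => proj1_sig (constructive_indefinite_description _ (Hb n))).
  assert (bs : forall n, lt (b n) d /\ forall g, A n g -> lt (b n) g -> lt g d -> False).
  { intro n; exact (proj2_sig (constructive_indefinite_description _ (Hb n))). }
  apply (proj2 Hcf om om_lt_sigma). exists (fun y => exists n, y = b n). split.
  - split.
    + intros y [n ->]; apply bs.
    + intros b' Hb'. destruct (Hs b' Hb') as [g [[n Ag] [G1 G2]]].
      exists (b n); split; [eauto|]. left. apply (lt_le_trans _ g); auto.
      apply not_lt_le. intros H; apply (proj2 (bs n) g); auto.
  - set (ix := fun y => epsilon (inhabits 0) (fun n => y = b n)).
    exists (fun y => f (ix y)). split.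
    + intros y _; apply f_lt_om.
    + intros x y Hx Hy E. apply f_inj in E.
      pose proof (epsilon_spec (inhabits 0) (fun n => x = b n) Hx) as Ex.
      pose proof (epsilon_spec (inhabits 0) (fun n => y = b n) Hy) as Ey.
      fold (ix x) in Ex; fold (ix y) in Ey. rewrite Ex, Ey, E; reflexivity.
Qed.

Definition step a m (A : T -> Prop) : T -> Prop :=
  cl a (fun x => A x \/ exists d, (Sset d /\ A d) /\ Cm lt sigma c0 C d m x).
Fixpoint stage a m (B : T -> Prop) (n : nat) : T -> Prop :=
  match n with O => cl a B | S n' => step a m (stage a m B n') end.
Definition ecl a m B := cl a (fun x => exists n, stage a m B n x).

Lemma stage_lt a m B n x : stage a m B n x -> lt x a.
Proof. destruct n; simpl; apply cl_lt. Qed.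
Lemma stage_closed a m B n x : lt x a -> sup_self lt (stage a m B n) x -> stage a m B n x.
Proof. destruct n; simpl; apply cl_closed. Qed.
Lemma stage_base a m B n x : B x -> lt x a -> stage a m B n x.
Proof.
  intros HB Hx; induction n; simpl.
  - apply cl_in; auto.
  - apply cl_in; auto.
Qed.

Lemma stage_card a m B n k :
  (forall b, lt b a -> exists g, B g /\ lt g a /\ le lt b g) ->
  hess k -> le lt om k -> le lt (mup m) k -> inj B (below lt k) -> inj (stage a m B n) (below lt k).
Proof.
  intros Hcof Hk Hom Hm HB. induction n; simpl.
  - apply cl_card; auto. intros b Hb; destruct (Hcof b Hb) as [g [G1 [G2 G3]]]; eauto.
  - unfold step. apply cl_card; auto.
    + intros b Hb; destruct (Hcof b Hb) as [g [G1 [G2 G3]]]. exists g; split; auto.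
      left; apply stage_base; auto.
    + apply union2; auto. apply union_bound; auto.
      * eapply inj_mono_l; [|exact IHn]. intros x [_ H]; auto.
      * intros d [Hd _]. apply Cm_card; auto.
Qed.

Lemma ecl_card a m B k :
  (forall b, lt b a -> exists g, B g /\ lt g a /\ le lt b g) ->
  hess k -> le lt om k -> le lt (mup m) k -> inj B (below lt k) -> inj (ecl a m B) (below lt k).
Proof.
  intros Hcof Hk Hom Hm HB. unfold ecl. apply cl_card; auto.
  - intros b Hb; destruct (Hcof b Hb) as [g [G1 [G2 G3]]]. exists g; split; auto.
    exists 0; apply stage_base; auto.
  - apply inj_mono_l with (A' := fun x => exists n : nat, True /\ stage a m B n x).
    { intros x [n H]; eauto. }
    apply union_bound; auto.
    + exists f. split; [intros; apply (lt_le_trans _ om); [apply f_lt_om|auto]|].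
      intros; apply f_inj; auto.
    + intros n _; apply stage_card; auto.
Qed.

Lemma ecl_cond a m B d x : Sset d -> ecl a m B d -> Cm lt sigma c0 C d m x -> ecl a m B x.
Proof.
  intros Hd [Hda Hdd] Hx.
  assert (HU : exists n, stage a m B n d).
  { destruct Hdd as [H|H]; auto. apply NNPP; intros Hn.
    apply (no_omega_limit d (stage a m B) (HS_cf d Hd)); auto.
    intros n Hs. apply Hn. exists n. apply stage_closed; auto. }
  destruct HU as [n Hn].
  assert (Hxa : lt x a) by (eapply lt_trans; [eapply Cm_lt; eauto| auto]).
  apply cl_in; auto. exists (S n). simpl. apply cl_in; auto.
  right. exists d; split; auto.
Qed.

Fixpoint E a m : T -> Prop :=
  match m with
  | O => ecl a O (Xc a)
  | S m' => ecl a (S m') (fun x => Xc a x \/ E a m' x)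
  end.

Lemma E_lt a m x : E a m x -> lt x a.
Proof. destruct m; simpl; apply cl_lt. Qed.
Lemma E_closed a m x : lt x a -> sup_self lt (E a m) x -> E a m x.
Proof. destruct m; simpl; apply cl_closed. Qed.
Lemma Xc_lt a x : Xc a x -> lt x a.
Proof. apply (proj1 (proj1 (proj2 (cfX_spec a)))). Qed.
Lemma ecl_base a m B x : B x -> lt x a -> ecl a m B x.
Proof. intros; apply cl_in; auto. exists 0; apply stage_base; auto. Qed.
Lemma E_Xc a m x : Xc a x -> E a m x.
Proof. intros H; pose proof (Xc_lt a x H); destruct m; simpl; apply ecl_base; auto. Qed.
Lemma E_mono a m x : E a m x -> E a (S m) x.
Proof. intros H. simpl. apply ecl_base; [right; auto| eapply E_lt; eauto]. Qed.
Lemma E_cond a m d x : Sset d -> E a m d -> Cm lt sigma c0 C d m x -> E a m x.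
Proof. destruct m; simpl; apply ecl_cond. Qed.

Lemma Xc_cof a : forall b, lt b a -> exists g, Xc a g /\ lt g a /\ le lt b g.
Proof.
  intros b Hb. destruct (proj2 (proj1 (proj2 (cfX_spec a))) b Hb) as [g [G1 G2]].
  exists g; split; [|split]; auto. apply Xc_lt; auto.
Qed.

Lemma E_card a m : inj (E a m) (below lt (kap a m)).
Proof.
  induction m; simpl.
  - apply ecl_card; auto using kap_hess, kap_om, mup_le_kap.
    + apply Xc_cof.
    + eapply inj_below_mono; [apply cf_le_kap| apply cfX_spec].
  - apply ecl_card; auto using kap_hess, kap_om, mup_le_kap.
    + intros b Hb; destruct (Xc_cof a b Hb) as [g [G1 G2]]; eauto.
    + apply union2; auto using kap_hess, kap_om.
      * eapply inj_below_mono; [apply cf_le_kap| apply cfX_spec].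
      * eapply inj_below_mono; [apply kap_mono| exact IHm].
Qed.

Lemma main_result :
  exists e : T -> nat -> T -> Prop,
    (forall a m, club_in lt a (e a m)) /\
    (forall a m x, e a m x -> e a (S m) x) /\
    (forall a m,
      (exists k, is_cf lt a k /\ card_le_sum lt (e a m) k (mup m)) /\
      (forall d, Sset d -> e a m d -> forall x, Cm lt sigma c0 C d m x -> e a m x)).
Proof.
  exists E. split; [|split].
  - intros a m. split; [split|].
    + intros x; apply E_lt.
    + intros b Hb. destruct (Xc_cof a b Hb) as [g [G1 [G2 G3]]]. exists g; split; auto.
      apply E_Xc; auto.
    + intros x Hx _ Hs. apply E_closed; auto.
  - apply E_mono.
  - intros a m. split.
    + exists (cfk a). split; [apply cfX_spec|].
      pose proof (E_card a m) as H. unfold kap in H.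
      destruct excluded_middle_informative.
      * exists (fun _ => False), (E a m). split; [auto|split; auto].
        exists (fun x => x); split; intros; contradiction.
      * exists (E a m), (fun _ => False). split; [auto|split; auto].
        exists (fun x => x); split; intros; contradiction.
    + intros d Hd H x Hx. eapply E_cond; eauto.
Qed.

End Main.

Theorem lemma5p6
  (T : Type) (lt : T -> T -> Prop) (mu sigma : T)
  (mu_ : nat -> T) (mup : nat -> T)
  (Sset : T -> Prop) (c0 : T -> T -> T) (C : T -> T -> Prop)
  (* T, ordered by lt, is lambda = mu^+ *)
  (Hwo : strict_well_order lt)
  (Hlam1 : ~ card_le (fun _ => True) (below lt mu))
  (Hlam2 : forall b, card_le (below lt b) (below lt mu))
  (* mu is a cardinal, the limit of the mu_i *)
  (Hmu : is_card lt mu)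
  (Hmu_inc : forall i j, i < j -> lt (mu_ i) (mu_ j))
  (Hmu_reg : forall i, regular lt (mu_ i))
  (Hmu_lt : forall i, lt (mu_ i) mu)
  (Hmu_cof : forall b, lt b mu -> exists i, le lt b (mu_ i))
  (Hmup : forall m, csucc lt (mu_ m) (mup m))
  (* sigma regular, aleph_0 < sigma < mu_0 *)
  (Hsig_reg : regular lt sigma)
  (Hsig_unc : uncountable lt sigma)
  (Hsig_lt : lt sigma (mu_ 0))
  (* S stationary subset of S^lambda_sigma *)
  (HS_cf : forall d, Sset d -> is_cf lt d sigma)
  (HS_stat : stationary lt Sset)
  (* c0_delta: increasing enumeration of a club of delta of order type sigma *)
  (Hc0_inc : forall d, Sset d -> forall z z', lt z sigma -> lt z' sigma ->
      lt z z' -> lt (c0 d z) (c0 d z'))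
  (Hc0_club : forall d, Sset d ->
      club_in lt d (fun x => exists z, lt z sigma /\ x = c0 d z))
  (Hc0_guess : forall E, club lt E ->
      stationary lt (fun d => Sset d /\
        forall z, lt z sigma -> E (c0 d z)))
  (* the sequence C *)
  (HC_club : forall d, Sset d -> club_in lt d (C d))
  (HC_c0 : forall d, Sset d -> forall z, lt z sigma -> C d (c0 d z))
  (HC_card : forall d, Sset d -> forall eps m, lt eps sigma ->
      card_le (fun x => C d x /\ inI lt c0 d eps m x) (below lt (mup m)))
  (HC_nacc : forall d, Sset d -> forall eps m, lt eps sigma -> forall a,
      nacc lt (C d) a -> inI lt c0 d eps m a ->
      forall k, is_cf lt a k -> lt (mup m) k)
  (HC_guess : forall E, club lt E ->
      stationary lt (fun d => Sset d /\
        forall eps m, lt eps sigma ->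
          exists x, E x /\ nacc lt (C d) x /\ inI lt c0 d eps m x)) :
  exists e : T -> nat -> T -> Prop,
    (* generalized C-sequence *)
    (forall a m, club_in lt a (e a m)) /\
    (forall a m x, e a m x -> e a (S m) x) /\
    (forall a m,
      (exists k, is_cf lt a k /\ card_le_sum lt (e a m) k (mup m)) /\
      (forall d, Sset d -> e a m d -> forall x, Cm lt sigma c0 C d m x -> e a m x)).
Proof.
  exact (main_result T lt Hwo sigma Hsig_unc mu_ mup Hmu_inc Hmup Hsig_lt Sset c0 C
           HS_cf Hc0_club HC_club HC_card).
Qed.
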